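(* Let $k$ be an odd integer with $k\ge 5$, let $D$ be a strong $k$-quasi-transitive digraph with $\mathrm{diam}(D)\ge k+2$, let $u,v\in V(D)$ with $d(u,v)=k+2$, and let $P$ be a shortest $(u,v)$-path. Let $I=\{x\in V(D)\setminus V(P): x\Rightarrow V(P)\}$, $W=\{x\in V(D)\setminus V(P): V(P)\Rightarrow x\}$ and $B=V(D)\setminus(V(P)\cup I\cup W)$. If $D[V(P)]$ is a semicomplete bipartite digraph, then $D[B]$ is either a semicomplete bipartite digraph or an empty digraph.
   Context: All digraphs are finite, without loops or multiple arcs (opposite arcs allowed). Vertices $x,y$ are adjacent if $xy$ or $yx$ is an arc. For vertex sets $X,Y$ (singletons identified with vertices), $X\Rightarrow Y$ means there is no arc from $Y$ to $X$. For $k\ge 2$, $D$ is $k$-quasi-transitive if for every path $x_0x_1\ldots x_k$ of length $k$, $x_0$ and $x_k$ are adjacent. $d(x,y)$ is the length of a shortest $(x,y)$-path, $\mathrm{diam}(D)=\max_{x,y}d(x,y)$. $D[S]$ is the induced subdigraph. A semicomplete bipartite digraph: there is a bipartition $(X,Y)$ of the vertex set with no arcs inside $X$ or $Y$ and every vertex of $X$ adjacent to every vertex of $Y$. An empty digraph is one with no arcs. *)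

(* Defs.v *)
From mathcomp Require Import all_boot.
Set Implicit Arguments. Unset Strict Implicit. Unset Printing Implicit Defensive.

(* A digraph is a finite vertex type T with an arc relation A : rel T
   (A x y = there is an arc x -> y); loops are excluded by a separate
   irreflexivity hypothesis; opposite arcs are allowed. *)

Section Digraph.
Variables (T : finType) (A : rel T).

Definition adjacent (x y : T) : bool := A x y || A y x.

(* A path x :: p : consecutive arcs and pairwise distinct vertices.
   Its length is size p; it goes from x to last x p. *)
Definition is_dpath (x : T) (p : seq T) : bool := path A x p && uniq (x :: p).

Definition k_quasi_transitive (k : nat) : Prop :=
  forall x p, size p = k -> is_dpath x p -> adjacent x (last x p).

Definition strong : Prop := forall x y : T, connect A x y.

Definition is_dist (x y : T) (n : nat) : Prop :=
  (exists p, [/\ is_dpath x p, last x p = y & size p = n]) /\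
  (forall p, is_dpath x p -> last x p = y -> n <= size p).

Definition diam_ge (m : nat) : Prop :=
  exists x y n, is_dist x y n /\ m <= n.

Definition shortest_path (x y : T) (p : seq T) : Prop :=
  [/\ is_dpath x p, last x p = y &
      forall q, is_dpath x q -> last x q = y -> size p <= size q].

Definition dom (X Y : {set T}) : bool := [forall x in X, forall y in Y, ~~ A y x].

Definition semicomplete_bipartite (S : {set T}) : Prop :=
  exists X Y : {set T},
    [/\ X :|: Y = S, [disjoint X & Y],
        (forall x y, x \in X -> y \in X -> ~~ A x y),
        (forall x y, x \in Y -> y \in Y -> ~~ A x y) &
        (forall x y, x \in X -> y \in Y -> adjacent x y)].

Definition empty_digraph (S : {set T}) : Prop :=
  forall x y, x \in S -> y \in S -> ~~ A x y.

End Digraph.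

(* Main.v *)
Require Import Defs.
From mathcomp Require Import all_boot zify.
Set Implicit Arguments. Unset Strict Implicit. Unset Printing Implicit Defensive.

Ltac lia' := first [ (repeat match goal with H : ?P |- _ => lazymatch P with
  | is_true (leq _ _) => fail | @eq nat _ _ => fail | ~ (@eq nat _ _) => fail
  | is_true (leq _ _ && leq _ _) => fail | is_true (~~ (_ == _)) => fail
  | nat => fail | _ => clear H end end; lia) | lia ].

Definition adjb (T : finType) (A : rel T) (c : nat -> T) z m := A (c m) z || A z (c m).

Lemma C3abs (T : finType) (A : rel T) (k : nat) (c : nat -> T) (x y : T) (ix jy : nat) :
  k %% 2 = 1 -> 5 <= k ->
  (forall i j, i <= k.+2 -> j <= k.+2 -> A (c i) x -> A x (c j) -> j <= i + 2) ->
  (forall i j, i <= k.+2 -> j <= k.+2 -> A (c i) y -> A y (c j) -> j <= i + 2) ->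
  (forall j, A x (c j) -> A (c (j + (k - 2))) y -> j + (k - 2) <= k.+2 -> adjacent A x y) ->
  (forall j, A y (c j) -> A (c (j + (k - 2))) x -> j + (k - 2) <= k.+2 -> adjacent A y x) ->
  (forall a, a <= k.+2 -> adjb A c x a -> a %% 2 = 0) ->
  ix <= k.+2 -> A (c ix) x ->
  (exists2 j', j' <= 3 & j' %% 2 = jy %% 2 /\ A y (c j')) -> jy %% 2 = 1 ->
  adjb A c x 0 -> adjb A c x 2 ->
  adjb A c x ((k - 1)) -> adjb A c x ((k + 1)) ->
  adjb A c y 1 -> adjb A c y 3 ->
  adjb A c y k -> adjb A c y ((k + 2)) ->
  adjacent A x y.
Proof.
move=> kk k5 Sx Sy Cxy Cyx Hx hix aix [j' h1 [h2 h3]] py cx0 cx2 cx3 cx1 cy0 cy2 cy3 cy1.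
apply/negPn/negP => nadj.
have F1 : A x (c 2) -> A (c k) y -> False.
  move=> a1 a2; apply: (negP nadj); apply: (Cxy 2 a1); last lia'.
  by rewrite (_ : 2 + (k - 2) = k) //; lia'.
have F2 : A y (c 3) -> A (c k.+1) x -> False.
  move=> a1 a2; apply: (negP nadj); rewrite /adjacent orbC.
  apply: (Cyx 3 a1); last lia'.
  by rewrite (_ : 3 + (k - 2) = k.+1) //; lia'.
have F3 : A y (c 1) -> A (c (k - 1)) x -> False.
  move=> a1 a2; apply: (negP nadj); rewrite /adjacent orbC.
  apply: (Cyx 1 a1); last lia'.
  by rewrite (_ : 1 + (k - 2) = k - 1) //; lia'.
have F4 : A x (c 4) -> A (c k.+2) y -> False.
  move=> a1 a2; apply: (negP nadj); apply: (Cxy 4 a1); last lia'.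
  by rewrite (_ : 4 + (k - 2) = k.+2) //; lia'.
rewrite (_ : k + 1 = k.+1) in cx1; last lia'.
rewrite (_ : k + 2 = k.+2) in cy1; last lia'.
have pix : ix %% 2 = 0 by apply: Hx; rewrite // /adjb aix.
clear Hx.
case: (boolP (A x (c 2))) => ox2.
- have oyk : A y (c k) by case/orP: cy3 => // h; case: (F1 ox2 h).
  have oy1 : A y (c 1).
    case/orP: cy0 => // h; have := Sy 1 k ltac:(lia') ltac:(lia') h oyk; lia'.
  have ox3 : A x (c (k - 1)) by case/orP: cx3 => // h; case: (F3 oy1 h).
  case/orP: cy2 => h3'.
  + have k5' : k = 5 by have := Sy 3 k ltac:(lia') ltac:(lia') h3' oyk; lia'.
    case/orP: cy1 => h.
      by apply: F4 h; rewrite (_ : 4 = k - 1) //; lia'.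
    by have := Sy 3 k.+2 ltac:(lia') ltac:(lia') h3' h; lia'.
  + have ox1 : A x (c k.+1) by case/orP: cx1 => // h; case: (F2 h3' h).
    have := Sx ix k.+1 hix ltac:(lia') aix ox1 => hh.
    have [e|e] : ix = k - 1 \/ ix = k.+1 by lia'.
    * by apply: (F3 oy1); rewrite -e.
    * by apply: (F2 h3'); rewrite -e.
- have ix2 : A (c 2) x by case/orP: cx2 => // h; rewrite h in ox2.
  have ixk : A (c k.+1) x.
    case/orP: cx1 => // h; have := Sx 2 k.+1 ltac:(lia') ltac:(lia') ix2 h; lia'.
  have ny3 : ~~ A y (c 3) by apply/negP => h; apply: (F2 h ixk).
  have iy3 : A (c 3) y by case/orP: cy2 => // h; rewrite h in ny3.
  have oy1 : A y (c 1).
    have [e|e] : j' = 1 \/ j' = 3 by lia'.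
      by rewrite -e.
    by move: ny3; rewrite -e h3.
  have ox3 : A x (c (k - 1)) by case/orP: cx3 => // h; case: (F3 oy1 h).
  have k5' : k = 5 by have := Sx 2 (k - 1) ltac:(lia') ltac:(lia') ix2 ox3; lia'.
  case/orP: cy1 => h.
    by apply: F4 h; rewrite (_ : 4 = k - 1) //; lia'.
  by have := Sy 3 k.+2 ltac:(lia') ltac:(lia') iy3 h; lia'.
Qed.

Section Main.
Variables (T : finType) (A : rel T) (k : nat) (u : T) (p : seq T).
Hypothesis Airr : irreflexive A.
Hypothesis k5 : 5 <= k.
Hypothesis kodd : odd k.
Hypothesis kq : k_quasi_transitive A k.
Hypothesis dp : is_dpath A u p.
Hypothesis sz : size p = k.+2.
Hypothesis minp : forall q, is_dpath A u q -> last u q = last u p -> k.+2 <= size q.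

Local Notation n := k.+2.

Lemma k2 : k %% 2 = 1. Proof. by rewrite modn2 kodd. Qed.

Definition c i := nth u (u :: p) i.

Lemma c0 : c 0 = u. Proof. by []. Qed.
Lemma cn : c n = last u p.
Proof. rewrite /c -sz. by rewrite (_ : size p = (size (u :: p)).-1) // nth_last. Qed.

Lemma c_inj i j : i <= n -> j <= n -> c i = c j -> i = j.
Proof.
move=> hi hj e. case/andP: dp => _ U.
by apply/eqP; rewrite -(nth_uniq u _ _ U) /= ?sz ?ltnS //; apply/eqP.
Qed.

Lemma c_mem i : i <= n -> c i \in u :: p.
Proof. by move=> hi; apply: mem_nth; rewrite /= sz ltnS. Qed.

Lemma memVP z : z \in u :: p -> exists2 i, i <= n & z = c i.
Proof.
move=> hz; exists (index z (u :: p)); last by rewrite /c nth_index.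
by rewrite -ltnS -sz; rewrite -index_mem in hz.
Qed.

Lemma arc_next i : i < n -> A (c i) (c i.+1).
Proof.
move=> hi; case/andP: dp => P _.
move/pathP: P => /(_ u i); rewrite sz => /(_ hi).
by rewrite /c /=.
Qed.

Lemma path_map_gen (F : nat -> T) h L :
  path (fun i j => A (F i) (F j)) h L -> path A (F h) (map F L).
Proof. by elim: L h => //= a L IH h /andP[-> /IH]. Qed.

Lemma kq_gen (F : nat -> T) h L :
  {in h :: L &, injective F} -> path (fun i j => A (F i) (F j)) h L ->
  uniq (h :: L) -> size L = k -> adjacent A (F h) (F (last h L)).
Proof.
move=> inj P U S; rewrite -last_map.
apply: kq; first by rewrite size_map.
rewrite /is_dpath path_map_gen //=.
by change (uniq (map F (h :: L))); rewrite (map_inj_in_uniq inj).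
Qed.

Lemma short_gen (F : nat -> T) L :
  F 0 = u -> F n = last u p -> {in 0 :: L &, injective F} ->
  path (fun i j => A (F i) (F j)) 0 L -> uniq (0 :: L) -> last 0 L = n ->
  n <= size L.
Proof.
move=> F0 Fn inj P U l; rewrite -(size_map F); apply: minp.
  rewrite /is_dpath -F0 path_map_gen //=.
  by change (uniq (map F (0 :: L))); rewrite (map_inj_in_uniq inj).
by rewrite -{1}F0 last_map l Fn.
Qed.

Lemma last_iota h l : last h (iota h.+1 l) = h + l.
Proof. by elim: l h => [|l IH] h /=; rewrite ?addn0 // IH addnS. Qed.

Lemma path_iota (F : nat -> T) h l : h + l <= n -> (forall i, i <= n -> F i = c i) ->
  path (fun i j => A (F i) (F j)) h (iota h.+1 l).
Proof.
elim: l h => [|l IH] h //= hl FE.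
rewrite !FE ?arc_next ?IH //; lia'.
Qed.


Hypothesis bip : semicomplete_bipartite A [set x | x \in u :: p].

Lemma vp_par : (forall i j, i <= n -> j <= n -> i %% 2 = j %% 2 -> ~~ A (c i) (c j)) /\
  (forall i j, i <= n -> j <= n -> i %% 2 <> j %% 2 -> adjacent A (c i) (c j)).
Proof.
case: bip => X [Y] [XY dXY nX nY XYa].
have inU i : i <= n -> (c i \in X) || (c i \in Y).
  by move=> hi; rewrite -in_setU XY inE c_mem.
have inY i : i <= n -> (c i \in Y) = ~~ (c i \in X).
  move=> hi; case hX: (c i \in X) => /=.
    by rewrite (disjointFr dXY hX).
  by move: (inU i hi); rewrite hX.
have cX i : i <= n -> (c i \in X) = (c 0 \in X) (+) odd i.
  elim: i => [|i IH] hi; first by rewrite addbF.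
  have a := arc_next (hi : i < n).
  rewrite /= addbN -(IH (ltnW hi)).
  case hX: (c i \in X); case hX': (c i.+1 \in X) => //.
  - by move: (nX _ _ hX hX'); rewrite a.
  - have hY : c i \in Y by rewrite inY ?hX // ltnW.
    have hY' : c i.+1 \in Y by rewrite inY ?hX'.
    by move: (nY _ _ hY hY'); rewrite a.
split.
- move=> i j hi hj e.
  have e' : odd i = odd j by move: e; rewrite !modn2; case: (odd i); case: (odd j).
  case hX: (c i \in X).
    by apply: nX => //; rewrite cX // -e' -cX.
  apply: nY; first by rewrite inY ?hX.
  by rewrite inY // cX // -e' -cX // hX.
- move=> i j hi hj e.
  have e' : odd i = ~~ odd j.
    by move: e; rewrite !modn2; case: (odd i); case: (odd j).
  case hX: (c i \in X).
    by apply: XYa => //; rewrite inY // cX // -addbN -e' -cX // hX.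
  have e2 : odd j = ~~ odd i by rewrite e' negbK.
  rewrite /adjacent orbC; apply: XYa.
    by rewrite cX // e2 addbN -cX // hX.
  by rewrite inY ?hX.
Qed.

Lemma vp_same i j : i <= n -> j <= n -> i %% 2 = j %% 2 -> ~~ A (c i) (c j).
Proof. by case: vp_par => H _; apply: H. Qed.

Lemma vp_diff i j : i <= n -> j <= n -> i %% 2 <> j %% 2 -> adjacent A (c i) (c j).
Proof. by case: vp_par => _ H; apply: H. Qed.

Lemma vp_adj i j : i <= n -> j <= n -> adjacent A (c i) (c j) -> i %% 2 <> j %% 2.
Proof.
move=> hi hj a e; move: a; rewrite /adjacent.
by rewrite (negbTE (vp_same hi hj e)) (negbTE (vp_same hj hi (esym e))).
Qed.


Lemma has_iota a l1 b l2 :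
  has (fun x => x \in iota a l1) (iota b l2) = [&& 0 < l1, 0 < l2, a < b + l2 & b < a + l1].
Proof.
apply/idP/idP.
  by case/hasP => x; rewrite !mem_iota; lia'.
move=> H; apply/hasP; exists (maxn a b); rewrite mem_iota; lia'.
Qed.

Ltac uniq_tac := rewrite /=;
  repeat (rewrite ?cat_uniq ?cons_uniq ?iota_uniq ?mem_cat ?in_cons ?mem_iota ?has_cat ?has_iota /=);
  rewrite ?in_nil ?orbF ?andbT;
  lia'.

Ltac all_tac := let x := fresh "x" in apply/allP => x; rewrite /= ?mem_cat ?in_cons ?mem_iota /=;
  repeat (rewrite ?mem_cat ?in_cons ?mem_iota /=); rewrite ?in_nil ?orbF; lia'.

Ltac size_tac := repeat (rewrite ?size_cat ?size_iota /=); lia'.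

Lemma inj_c L : all (fun i => i <= n) L -> {in L &, injective c}.
Proof. by move=> /allP H i j /H hi /H hj; apply: c_inj. Qed.

Lemma no_fwd a b : a.+2 <= b -> b <= n -> ~~ A (c a) (c b).
Proof.
move=> ab bn; apply/negP => e.
have := @short_gen c (iota 1 a ++ b :: iota b.+1 (n - b)) erefl cn.
rewrite size_cat /= !size_iota.
have -> : last 0 (iota 1 a ++ b :: iota b.+1 (n - b)) = n.
  by rewrite last_cat /= last_iota; lia'.
have P : path (fun i j => A (c i) (c j)) 0 (iota 1 a ++ b :: iota b.+1 (n - b)).
  rewrite cat_path path_iota //=; last lia'.
  by rewrite last_iota e path_iota //; lia'.
have U : uniq (0 :: iota 1 a ++ b :: iota b.+1 (n - b)) by uniq_tac.
have I : {in 0 :: iota 1 a ++ b :: iota b.+1 (n - b) &, injective c}.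
  by apply: inj_c; all_tac.
move=> /(_ I P U erefl); lia'.
Qed.

Lemma chord a b : a < b -> b <= n -> (b - a) %% 2 = 1 -> 3 <= b - a -> A (c b) (c a).
Proof.
move=> ab bn o3 h3.
have an : a <= n by lia'.
have := vp_diff an bn.
rewrite /adjacent (negbTE (no_fwd _ bn)) ?orbF; last lia'.
by apply; lia'.
Qed.


Definition f1 (z : T) i := if i == n.+1 then z else c i.
Definition f2 (x y : T) i := if i == n.+2 then y else if i == n.+1 then x else c i.

Lemma f1c z i : i <= n -> f1 z i = c i.
Proof. by move=> hi; rewrite /f1; case: eqP => // e; lia'. Qed.
Lemma f1z z : f1 z n.+1 = z.
Proof. by rewrite /f1 eqxx. Qed.
Lemma f2c x y i : i <= n -> f2 x y i = c i.
Proof. move=> hi; rewrite /f2; case: eqP => [e|_]; first lia'.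
by case: eqP => // e; lia'. Qed.
Lemma f2x x y : f2 x y n.+1 = x.
Proof. by rewrite /f2 eqxx; case: eqP => //; lia'. Qed.
Lemma f2y x y : f2 x y n.+2 = y.
Proof. by rewrite /f2 eqxx. Qed.

Lemma notVP z i : z \notin u :: p -> i <= n -> c i = z -> False.
Proof. by move=> hz hi e; move: hz; rewrite -e c_mem. Qed.

Lemma inj_f1 z L : z \notin u :: p -> all (fun i => i <= n.+1) L -> {in L &, injective (f1 z)}.
Proof.
move=> hz /allP H i j /H hi /H hj.
have [hi'|hi'] : i <= n \/ i = n.+1 by lia'.
all: have [hj'|hj'] : j <= n \/ j = n.+1 by lia'.
- by rewrite !f1c //; apply: c_inj.
- by rewrite (f1c z hi') hj' f1z => /(notVP hz).
- by rewrite (f1c z hj') hi' f1z => /esym /(notVP hz).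
- by rewrite hi' hj'.
Qed.

Lemma inj_f2 x y L : x \notin u :: p -> y \notin u :: p -> x != y ->
  all (fun i => i <= n.+2) L -> {in L &, injective (f2 x y)}.
Proof.
move=> hx hy xy /allP H i j /H hi /H hj.
have [hi'|[hi'|hi']] : i <= n \/ i = n.+1 \/ i = n.+2 by lia'.
all: have [hj'|[hj'|hj']] : j <= n \/ j = n.+1 \/ j = n.+2 by lia'.
all: try (rewrite (f2c x y hi')); try (rewrite (f2c x y hj')); rewrite ?hi' ?hj' ?f2x ?f2y //.
all: first [ by apply: c_inj | by move=> e; move: xy; rewrite e eqxx
  | by move/(notVP hx hi') | by move/(notVP hy hi') | by move/esym/(notVP hx hj')
  | by move/esym/(notVP hy hj') | by move/(notVP hx hj') | by move/(notVP hy hj')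
  | by move/esym/(notVP hx hi') | by move/esym/(notVP hy hi') ].
Qed.

Lemma kq1 z h L : z \notin u :: p -> all (fun i => i <= n.+1) (h :: L) -> uniq (h :: L) ->
  path (fun i j => A (f1 z i) (f1 z j)) h L -> size L = k ->
  adjacent A (f1 z h) (f1 z (last h L)).
Proof. by move=> hz al U P S; apply: kq_gen => //; apply: inj_f1. Qed.

Lemma kq2 x y h L : x \notin u :: p -> y \notin u :: p -> x != y ->
  all (fun i => i <= n.+2) (h :: L) -> uniq (h :: L) ->
  path (fun i j => A (f2 x y i) (f2 x y j)) h L -> size L = k ->
  adjacent A (f2 x y h) (f2 x y (last h L)).
Proof. by move=> hx hy xy al U P S; apply: kq_gen => //; apply: inj_f2. Qed.

Lemma path_chord (F : nat -> T) j b a m : (forall i, i <= n -> F i = c i) ->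
  j <= b -> b <= n -> a <= m -> m < j -> (b - a) %% 2 = 1 -> 3 <= b - a ->
  path (fun i j => A (F i) (F j)) j (iota j.+1 (b - j) ++ a :: iota a.+1 (m - a)).
Proof.
move=> FE jb bn am mj o h3.
rewrite cat_path path_iota //=; last lia'.
rewrite last_iota (_ : j + (b - j) = b); last lia'.
rewrite !FE ?chord ?path_iota //; lia'.
Qed.

Lemma last_chord j b a m : last j (iota j.+1 (b - j) ++ a :: iota a.+1 (m - a)) = a + (m - a).
Proof. by rewrite last_cat /= last_iota. Qed.

Definition adjz z m := A (c m) z || A z (c m).

Section Vertex.
Variable z : T.
Hypothesis hz : z \notin u :: p.

Lemma pi1 h l : h + l <= n -> path (fun i j => A (f1 z i) (f1 z j)) h (iota h.+1 l).
Proof. by move=> hl; apply: path_iota => // i; apply: f1c. Qed.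

Lemma S_lem i j : i <= n -> j <= n -> A (c i) z -> A z (c j) -> j <= i + 2.
Proof.
move=> hi hj ai aj; rewrite leqNgt; apply/negP => hij.
set L := iota 1 i ++ n.+1 :: j :: iota j.+1 (n - j).
suff : n <= size L by rewrite /L size_cat /= !size_iota; lia'.
apply: (@short_gen (f1 z)).
- by rewrite f1c.
- by rewrite f1c // cn.
- by apply: inj_f1 => //; rewrite /L; all_tac.
- rewrite cat_path pi1 //= ?last_iota ?f1z ?f1c // ai aj pi1 //; lia'.
- by rewrite /L; uniq_tac.
- by rewrite /L last_cat /= last_iota; lia'.
Qed.

Lemma out_chord j b a m : A z (c j) -> j <= b -> b <= n -> a <= m -> m < j ->
  (b - a) %% 2 = 1 -> 3 <= b - a -> (b - j) + (m - a) + 2 = k -> adjz z m.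
Proof.
move=> aj jb bn am mj o h3 sk.
set L := j :: iota j.+1 (b - j) ++ a :: iota a.+1 (m - a).
have al : all (fun i => i <= n.+1) (n.+1 :: L) by rewrite /L; all_tac.
have U : uniq (n.+1 :: L) by rewrite /L; uniq_tac.
have P : path (fun i j => A (f1 z i) (f1 z j)) n.+1 L.
  rewrite /L /= f1z f1c ?aj ?path_chord //; [exact: f1c | lia'].
have S : size L = k by rewrite /L /= size_cat /= !size_iota; lia'.
have := kq1 hz al U P S.
rewrite /L /= last_chord f1z (_ : a + (m - a) = m); last lia'.
rewrite f1c; last lia'.
by rewrite /adjz /adjacent orbC.
Qed.

Lemma in_chord i b a m : A (c i) z -> m <= b -> b <= n -> a <= i -> i < m ->
  (b - a) %% 2 = 1 -> 3 <= b - a -> (b - m) + (i - a) + 2 = k -> adjz z m.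
Proof.
move=> ai mb bn ai' im o h3 sk.
set L := iota m.+1 (b - m) ++ a :: iota a.+1 (i - a) ++ [:: n.+1].
have al : all (fun i => i <= n.+1) (m :: L) by rewrite /L; all_tac.
have U : uniq (m :: L) by rewrite /L; uniq_tac.
have P : path (fun i j => A (f1 z i) (f1 z j)) m L.
  rewrite /L -cat_cons catA cat_path path_chord //; last exact: f1c.
  rewrite last_cat /= last_iota /= f1z f1c ?andbT (_ : a + (i - a) = i) //; lia'.
have S : size L = k by rewrite /L; size_tac.
have := kq1 hz al U P S.
rewrite /L last_cat /= last_cat /= f1z f1c //; lia'.
Qed.

Lemma out_fw j : A z (c j) -> j + (k - 1) <= n -> adjz z (j + (k - 1)).
Proof.
move=> aj jn.
set L := j :: iota j.+1 (k - 1).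
have al : all (fun i => i <= n.+1) (n.+1 :: L) by rewrite /L; all_tac.
have U : uniq (n.+1 :: L) by rewrite /L; uniq_tac.
have P : path (fun i j => A (f1 z i) (f1 z j)) n.+1 L.
  by rewrite /L /= f1z f1c ?aj ?pi1 //; lia'.
have S : size L = k by rewrite /L /= size_iota; lia'.
have := kq1 hz al U P S.
by rewrite /L /= last_iota f1z f1c // /adjz /adjacent orbC.
Qed.

Lemma in_fw i : A (c i) z -> k - 1 <= i -> i <= n -> adjz z (i - (k - 1)).
Proof.
move=> ai ki hi.
set L := iota (i - (k - 1)).+1 (k - 1) ++ [:: n.+1].
have al : all (fun i => i <= n.+1) (i - (k - 1) :: L) by rewrite /L; all_tac.
have U : uniq (i - (k - 1) :: L) by rewrite /L; uniq_tac.
have P : path (fun i j => A (f1 z i) (f1 z j)) (i - (k - 1)) L.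
  rewrite /L cat_path pi1 /= ?last_iota; last lia'.
  rewrite f1z f1c ?andbT (_ : i - (k - 1) + (k - 1) = i) //; lia'.
have S : size L = k by rewrite /L size_cat size_iota /=; lia'.
have := kq1 hz al U P S.
by rewrite /L last_cat /= f1z f1c //; lia'.
Qed.

Lemma L2 i a : A (c i) z -> A z (c i.+1) -> a <= i -> a <= k - 2 ->
  i.+1 + (k - 2 - a) <= n -> False.
Proof.
move=> ai aj ha hk hn.
set L := iota (i - a).+1 a ++ n.+1 :: i.+1 :: iota i.+2 (k - 2 - a).
have al : all (fun i => i <= n.+1) (i - a :: L) by rewrite /L; all_tac.
have U : uniq (i - a :: L) by rewrite /L; uniq_tac.
have P : path (fun i j => A (f1 z i) (f1 z j)) (i - a) L.
  rewrite /L cat_path pi1 /= ?last_iota; last lia'.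
  rewrite (_ : i - a + a = i); last lia'.
  by rewrite f1z !f1c ?ai ?aj ?pi1 //; lia'.
have S : size L = k by rewrite /L; size_tac.
have := kq1 hz al U P S.
rewrite /L last_cat /= last_iota !f1c; try lia'.
move/vp_adj; have := k2; lia'.
Qed.

Lemma L2w i j : A (c i) z -> A z (c j) -> j + (k - 2) < i -> i <= n ->
  i %% 2 <> j %% 2 -> False.
Proof.
move=> ai aj hji hi hp.
set L := n.+1 :: j :: iota j.+1 (k - 2).
have al : all (fun i => i <= n.+1) (i :: L) by rewrite /L; all_tac.
have U : uniq (i :: L) by rewrite /L; uniq_tac.
have P : path (fun i j => A (f1 z i) (f1 z j)) i L.
  by rewrite /L /= f1z !f1c ?ai ?aj ?pi1 //; lia'.
have S : size L = k by rewrite /L; size_tac.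
have := kq1 hz al U P S.
rewrite /L /= last_iota !f1c; try lia'.
move/vp_adj; have := k2; lia'.
Qed.

Lemma o2 j : A z (c j) -> 2 <= j -> j <= n -> adjz z (j - 2).
Proof.
move=> aj h2 hn; have := k2 => kk.
have [h4|h4] := leqP 4 j.
  by apply: (@out_chord j n 2); try lia'.
by apply: (@out_chord j k 0); try lia'.
Qed.

Lemma o4 j : A z (c j) -> 4 <= j -> j <= n -> adjz z (j - 4).
Proof.
move=> aj h4 hn; have := k2 => kk.
by apply: (@out_chord j n 0); try lia'.
Qed.

Lemma i2 i : A (c i) z -> i + 2 <= n -> adjz z (i + 2).
Proof.
move=> ai hn; have := k2 => kk.
have [h4|h4] := leqP (i + 4) n.
  by apply: (@in_chord i k 0); try lia'.
by apply: (@in_chord i n 2); try lia'.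
Qed.

Lemma i4 i : A (c i) z -> i + 4 <= n -> adjz z (i + 4).
Proof.
move=> ai hn; have := k2 => kk.
by apply: (@in_chord i n 0); try lia'.
Qed.

Lemma L2' i : A (c i) z -> A z (c i.+1) -> i.+1 <= n -> False.
Proof.
move=> ai aj hn.
have [h|h] := leqP i (k - 2).
  by apply: (@L2 i i); lia'.
by apply: (@L2 i (k - 2)); lia'.
Qed.

Lemma D1 j : A z (c j) -> 4 <= j -> j <= n -> A z (c (j - 4)).
Proof.
move=> aj h4 hn; case/orP: (o4 aj h4 hn) => // h.
have := S_lem (_ : j - 4 <= n) hn h aj; lia'.
Qed.

Lemma D2 i : A (c i) z -> i + 4 <= n -> A (c (i + 4)) z.
Proof.
move=> ai hn; case/orP: (i4 ai hn) => // h.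
have := S_lem (_ : i <= n) hn ai h; lia'.
Qed.

Lemma Rep j : A z (c j) -> j <= n -> exists2 j', j' <= 3 & j' %% 2 = j %% 2 /\ A z (c j').
Proof.
move: j; elim/ltn_ind => j IH aj hn.
have [h4|h4] := leqP 4 j; last by exists j; [lia' | split].
have [j' h1 [h2 h3]] := IH (j - 4) ltac:(lia') (D1 aj h4 hn) ltac:(lia').
by exists j' => //; split => //; lia'.
Qed.

Lemma Rep' i : A (c i) z -> i <= n -> exists2 i', k - 1 <= i' <= n & i' %% 2 = i %% 2 /\ A (c i') z.
Proof.
have : forall d i, n - i <= d -> A (c i) z -> i <= n ->
    exists2 i', k - 1 <= i' <= n & i' %% 2 = i %% 2 /\ A (c i') z.
  elim=> [|d IH] i0 hd ai hn.
    by exists i0; [lia' | split].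
  have [h4|h4] := leqP (i0 + 4) n; last by exists i0; [lia' | split].
  have [i' h1 [h2 h3]] := IH (i0 + 4) ltac:(lia') (D2 ai h4) h4.
  by exists i' => //; split => //; lia'.
by move=> H ai hn; apply: (H (n - i)).
Qed.

Lemma Q j m : A z (c j) -> j <= n -> m <= j -> m %% 2 = j %% 2 -> adjz z m.
Proof.
move: j; elim/ltn_ind => j IH aj hn hm hp.
have [e|ne] := eqVneq m j; first by rewrite e /adjz aj orbT.
case/orP: (o2 aj ltac:(lia') hn) => h2; last by apply: (IH (j - 2)) => //; lia'.
have [e|ne2] := eqVneq m (j - 2); first by rewrite e /adjz h2.
case/orP: (o4 aj ltac:(lia') hn) => h4.
  have := S_lem (_ : j - 4 <= n) hn h4 aj; lia'.
by apply: (IH (j - 4)) => //; lia'.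
Qed.

Lemma Q' i m : A (c i) z -> i <= m -> m <= n -> m %% 2 = i %% 2 -> adjz z m.
Proof.
have : forall d i, n - i <= d -> A (c i) z -> i <= m -> m <= n -> m %% 2 = i %% 2 -> adjz z m.
  elim=> [|d IH] i0 hd ai hm hn hp.
    have -> : m = i0 by lia'.
    by rewrite /adjz ai.
  have [e|ne] := eqVneq m i0; first by rewrite e /adjz ai.
  case/orP: (i2 ai ltac:(lia')) => h2; first by apply: (IH (i0 + 2)) => //; lia'.
  have [e|ne2] := eqVneq m (i0 + 2); first by rewrite e /adjz h2 orbT.
  case/orP: (i4 ai ltac:(lia')) => h4; first by apply: (IH (i0 + 4)) => //; lia'.
  have := S_lem (_ : i0 <= n) (_ : i0 + 4 <= n) ai h4; lia'.
by move=> H ai hm hn hp; apply: (H (n - i) i).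
Qed.

Lemma B13 : A (c k.+1) z -> A z (c 3) -> False.
Proof.
move=> ai aj; have := k2 => kk.
case/orP: (@o2 _ aj isT ltac:(lia')) => /= h1.
- have := @in_fw k.+1 ai ltac:(lia') ltac:(lia').
  rewrite (_ : k.+1 - (k - 1) = 2); last lia'.
  case/orP => h2; first by apply: (@L2' 2) => //; lia'.
  by apply: (@L2' 1) => //; lia'.
- by apply: (@L2w k.+1 1) => //; lia'.
Qed.

Lemma B22 : A (c k) z -> A z (c 2) -> False.
Proof.
move=> ai aj; have := k2 => kk.
case/orP: (@o2 _ aj isT ltac:(lia')) => /= h1.
- have := @in_fw k ai ltac:(lia') ltac:(lia').
  rewrite (_ : k - (k - 1) = 1); last lia'.
  case/orP => h2; first by apply: (@L2' 1) => //; lia'.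
  by apply: (@L2' 0) => //; lia'.
- by apply: (@L2w k 0) => //; lia'.
Qed.

Lemma B31 : A (c (k - 1)) z -> A z (c 1) -> False.
Proof.
move=> ai aj; have := k2 => kk.
have := @in_fw (k - 1) ai ltac:(lia') ltac:(lia').
rewrite (_ : k - 1 - (k - 1) = 0); last lia'.
case/orP => h0; first by apply: (@L2' 0) => //; lia'.
have := @i2 (k - 1) ai ltac:(lia'); rewrite (_ : k - 1 + 2 = k.+1); last lia'.
case/orP => h1; first by apply: (@L2w k.+1 1) => //; lia'.
have := @out_fw 1 aj ltac:(lia'); rewrite (_ : 1 + (k - 1) = k); last lia'.
case/orP => h2; first by apply: (@L2w k 0) => //; lia'.
apply: (@L2' (k - 1)) => //; rewrite (_ : (k - 1).+1 = k) //; lia'.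
Qed.

Lemma B33 : A (c (k - 1)) z -> A z (c 3) -> False.
Proof.
move=> ai aj; have := k2 => kk.
case/orP: (@o2 _ aj isT ltac:(lia')) => /= h1; last exact: B31.
have := @out_fw 3 aj ltac:(lia'); rewrite (_ : 3 + (k - 1) = k.+2); last lia'.
case/orP => h2; last by have := S_lem (_ : k - 1 <= n) (_ : k.+2 <= n) ai h2; lia'.
have := @in_fw (k - 1) ai ltac:(lia') ltac:(lia').
rewrite (_ : k - 1 - (k - 1) = 0); last lia'.
case/orP => h0; last by apply: (@L2w k.+2 0) => //; lia'.
have := @i2 (k - 1) ai ltac:(lia'); rewrite (_ : k - 1 + 2 = k.+1); last lia'.
case/orP => h3; first exact: B13.
by have := S_lem (_ : 0 <= n) (_ : k.+1 <= n) h0 h3; lia'.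
Qed.

Lemma NM i j : A (c i) z -> A z (c j) -> i <= n -> j <= n -> i %% 2 <> j %% 2 -> False.
Proof.
move=> ai aj hi hj hp; have := k2 => kk.
have [j' h1 [h2 h3]] := Rep aj hj.
have [i' h4 [h5 h6]] := Rep' ai hi.
have [h|h] := ltnP (j' + (k - 2)) i'.
  by apply: (@L2w i' j') => //; lia'.
have : [\/ i' = k.+1 /\ j' = 3, i' = k /\ j' = 2, i' = k - 1 /\ j' = 1 | i' = k - 1 /\ j' = 3].
{ have : i' %% 2 <> j' %% 2 by lia'.
  have [e|[e|[e|e]]] : i' = k.+2 \/ i' = k.+1 \/ i' = k \/ i' = k - 1 by lia'.
  all: rewrite e; move=> hh.
  - lia'.
  - apply: Or41; lia'.
  - apply: Or42; lia'.
  - have [e'|e'] : j' = 1 \/ j' = 3 by lia'.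
    + by apply: Or43.
    + by apply: Or44. }
case=> [[? ?]|[? ?]|[? ?]|[? ?]]; subst.
- exact: B13 h6 h3.
- exact: B22 h6 h3.
- exact: B31 h6 h3.
- exact: B33 h6 h3.
Qed.

Lemma par_nb i0 j0 a : i0 <= n -> A (c i0) z -> j0 <= n -> A z (c j0) ->
  a <= n -> adjz z a -> a %% 2 = j0 %% 2.
Proof.
move=> hi0 ai0 hj0 aj0 ha /orP[h|h].
  by case: (eqVneq (a %% 2) (j0 %% 2)) => // /eqP ne; case: (NM h aj0 ha hj0 ne).
have e : i0 %% 2 = j0 %% 2.
  by case: (eqVneq (i0 %% 2) (j0 %% 2)) => // /eqP ne; case: (NM ai0 aj0 hi0 hj0 ne).
by case: (eqVneq (a %% 2) (j0 %% 2)) => // /eqP ne; case: (NM ai0 h hi0 ha); lia'.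
Qed.

Lemma corner t i0 j0 : i0 <= n -> A (c i0) z -> j0 <= n -> A z (c j0) -> t = j0 %% 2 ->
  [/\ adjz z t, adjz z (t + 2), adjz z (k - 1 + t) & adjz z (k + 1 + t)].
Proof.
move=> hi0 ai0 hj0 aj0 et.
have Ht a : a <= n -> adjz z a -> a %% 2 = t.
  by move=> ha h; rewrite et; apply: (par_nb hi0 ai0 hj0 aj0).
have t2 : t < 2 by rewrite et ltn_pmod.
have [j' h1 [h2 h3]] := Rep aj0 hj0.
have pj : j' %% 2 = t by rewrite h2 et.
have [i' h4 [h5 h6]] := Rep' ai0 hi0.
have pi' : i' %% 2 = t.
  by apply: Ht; [case/andP: h4 | rewrite /adjz h6].
clear Ht h2 h5 et hi0 ai0 hj0 aj0.
have kk := k2.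
have [e|e] : t = 0 \/ t = 1 by lia'.
all: rewrite e in pj pi' t2 *; clear e t2.
- have a0 : adjz z 0 by apply: (@Q j') => //; lia'.
  have atop : adjz z (k + 1) by apply: (@Q' i') => //; lia'.
  have a2 : adjz z 2.
    case/orP: atop => h.
      have := @in_fw (k + 1) h ltac:(lia') ltac:(lia').
      by rewrite (_ : k + 1 - (k - 1) = 2) //; lia'.
    by apply: (@Q (k + 1)) => //; lia'.
  rewrite ?addn0 ?add0n; split => //.
  case/orP: a0 => h.
    by apply: (@Q' 0) => //; lia'.
  by have := @out_fw 0 h ltac:(lia'); rewrite add0n ?addn0.
- have a0 : adjz z 1 by apply: (@Q j') => //; lia'.
  have atop : adjz z (k + 2) by apply: (@Q' i') => //; lia'.
  have a2 : adjz z 3.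
    case/orP: atop => h.
      have := @in_fw (k + 2) h ltac:(lia') ltac:(lia').
      by rewrite (_ : k + 2 - (k - 1) = 3) //; lia'.
    by apply: (@Q (k + 2)) => //; lia'.
  rewrite (_ : k + 1 + 1 = k + 2) //; last lia'.
  split => //.
  case/orP: a0 => h.
    by apply: (@Q' 1) => //; lia'.
  by have := @out_fw 1 h ltac:(lia'); rewrite addnC.
Qed.

End Vertex.

Section Two.
Variables x y : T.
Hypotheses (hx : x \notin u :: p) (hy : y \notin u :: p) (xy : x != y).

Lemma pi2 h l : h + l <= n -> path (fun i j => A (f2 x y i) (f2 x y j)) h (iota h.+1 l).
Proof. by move=> hl; apply: path_iota => // i; apply: f2c. Qed.

Lemma cross j : A x (c j) -> A (c (j + (k - 2))) y -> j + (k - 2) <= n -> adjacent A x y.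
Proof.
move=> aj ai hn.
set L := j :: iota j.+1 (k - 2) ++ [:: n.+2].
have al : all (fun i => i <= n.+2) (n.+1 :: L) by rewrite /L; all_tac.
have U : uniq (n.+1 :: L) by rewrite /L; uniq_tac.
have P : path (fun i j => A (f2 x y i) (f2 x y j)) n.+1 L.
  rewrite /L /= cat_path pi2 /= ?last_iota; last lia'.
  by rewrite f2x f2y !f2c ?aj ?ai //; lia'.
have S : size L = k by rewrite /L; size_tac.
have := kq2 hx hy xy al U P S.
by rewrite /L /= last_cat /= f2x f2y.
Qed.

Lemma c4path j : A x y -> A y (c j) -> j + (k - 2) <= n -> adjz x (j + (k - 2)).
Proof.
move=> a1 a2 hn.
set L := n.+2 :: j :: iota j.+1 (k - 2).
have al : all (fun i => i <= n.+2) (n.+1 :: L) by rewrite /L; all_tac.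
have U : uniq (n.+1 :: L) by rewrite /L; uniq_tac.
have P : path (fun i j => A (f2 x y i) (f2 x y j)) n.+1 L.
  by rewrite /L /= f2x f2y !f2c ?a1 ?a2 ?pi2 //; lia'.
have S : size L = k by rewrite /L; size_tac.
have := kq2 hx hy xy al U P S.
by rewrite /L /= last_iota f2x f2c // /adjz /adjacent orbC.
Qed.

Lemma C4 t j0 : (forall a, a <= n -> adjz x a -> a %% 2 = t) ->
  j0 <= n -> A y (c j0) -> j0 %% 2 = t -> A x y -> False.
Proof.
move=> Hx hj0 aj0 pj0 axy; have := k2 => kk.
have [j' h1 [h2 h3]] := Rep hy aj0 hj0.
have := c4path axy h3 ltac:(lia') => /Hx; lia'.
Qed.

End Two.

Lemma C3 x y ix jx iy jy : x \notin u :: p -> y \notin u :: p -> x != y ->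
  (forall a, a <= n -> adjz x a -> a %% 2 = 0) ->
  (forall a, a <= n -> adjz y a -> a %% 2 = 1) ->
  ix <= n -> A (c ix) x -> jx <= n -> A x (c jx) ->
  iy <= n -> A (c iy) y -> jy <= n -> A y (c jy) -> adjacent A x y.
Proof.
move=> hx hy xy Hx Hy hix aix hjx ajx hiy aiy hjy ajy.
have px : jx %% 2 = 0 by apply: Hx; rewrite // /adjz ajx orbT.
have py : jy %% 2 = 1 by apply: Hy; rewrite // /adjz ajy orbT.
have [cx0 cx2 cx3 cx1] := corner hx hix aix hjx ajx (esym px).
have [cy0 cy2 cy3 cy1] := corner hy hiy aiy hjy ajy (esym py).
have yx : y != x by rewrite eq_sym.
rewrite add0n in cx2.
rewrite addn0 in cx3.
rewrite addn0 in cx1.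
rewrite (_ : 1 + 2 = 3) // in cy2.
rewrite (_ : k - 1 + 1 = k) in cy3; last lia'.
rewrite (_ : k + 1 + 1 = k + 2) in cy1; last lia'.
apply: (@C3abs T A k c x y ix jy k2 k5 (@S_lem x hx) (@S_lem y hy)
  (fun j a b h => cross hx hy xy a b h) (fun j a b h => cross hy hx yx a b h) Hx hix aix
  (Rep hy ajy hjy) py) => //.
Qed.

Lemma dom_in z : ~~ dom A [set z] [set x | x \in u :: p] -> exists2 i, i <= n & A (c i) z.
Proof.
move/forallPn => [x]; rewrite negb_imply => /andP[]; rewrite in_set1 => /eqP ->.
move/forallPn => [y]; rewrite negb_imply negbK inE => /andP[/memVP [i hi ->] a].
by exists i.
Qed.

Lemma dom_out z : ~~ dom A [set x | x \in u :: p] [set z] -> exists2 j, j <= n & A z (c j).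
Proof.
move/forallPn => [x]; rewrite negb_imply inE => /andP[/memVP [j hj ->]].
move/forallPn => [y]; rewrite negb_imply negbK in_set1 => /andP[/eqP -> a].
by exists j.
Qed.

Definition tev z := [exists i : 'I_n.+1, adjz z i && (i %% 2 == 0)].

Lemma tevP z j0 i0 : z \notin u :: p -> i0 <= n -> A (c i0) z -> j0 <= n -> A z (c j0) ->
  tev z = (j0 %% 2 == 0).
Proof.
move=> hz hi0 ai0 hj0 aj0; apply/idP/idP.
  case/existsP => i /andP[a /eqP e].
  by rewrite -(par_nb hz hi0 ai0 hj0 aj0 (_ : (i : nat) <= n) a) ?e // -ltnS.
move=> e; apply/existsP; exists (Ordinal (hj0 : j0 < n.+1)).
by rewrite /= e /adjz aj0 orbT.
Qed.

Lemma main_sec :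
  let VP : {set T} := [set x | x \in u :: p] in
  let I : {set T} := [set x | (x \notin VP) && dom A [set x] VP] in
  let W : {set T} := [set x | (x \notin VP) && dom A VP [set x]] in
  let B : {set T} := ~: (VP :|: I :|: W) in
  semicomplete_bipartite A B \/ empty_digraph A B.
Proof.
move=> VP I W B.
have Bd z : z \in B -> [/\ z \notin u :: p, exists2 i, i <= n & A (c i) z
    & exists2 j, j <= n & A z (c j)].
  rewrite !inE => /norP[/norP[hv hi] hw].
  have hz : z \notin u :: p by [].
  rewrite hz /= in hi hw.
  by split => //; [apply: dom_in | apply: dom_out].
clearbody B.
left; exists [set z in B | tev z], [set z in B | ~~ tev z]; split.
- by apply/setP => z; rewrite !inE; case: (z \in B); case: (tev z).
- rewrite -setI_eq0; apply/eqP/setP => z; rewrite !inE.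
  by case: (z \in B); case: (tev z).
- move=> x y; rewrite !inE => /andP[bx tx] /andP[b_y ty].
  apply/negP => axy.
  have [hx [ix hix aix] [jx hjx ajx]] := Bd x bx.
  have [hy [iy hiy aiy] [jy hjy ajy]] := Bd y b_y.
  have [e|ne] := eqVneq x y; first by rewrite e Airr in axy.
  rewrite (tevP hx hix aix hjx ajx) in tx.
  rewrite (tevP hy hiy aiy hjy ajy) in ty.
  apply: (@C4 x y hx hy ne 0 jy) => //; last by apply/eqP.
  move=> a ha h; rewrite (par_nb hx hix aix hjx ajx ha h); exact/eqP.
- move=> x y; rewrite !inE => /andP[bx tx] /andP[b_y ty].
  apply/negP => axy.
  have [hx [ix hix aix] [jx hjx ajx]] := Bd x bx.
  have [hy [iy hiy aiy] [jy hjy ajy]] := Bd y b_y.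
  have [e|ne] := eqVneq x y; first by rewrite e Airr in axy.
  rewrite (tevP hx hix aix hjx ajx) in tx.
  rewrite (tevP hy hiy aiy hjy ajy) in ty.
  have pjy : jy %% 2 = 1 by move: ty; have := ltn_pmod jy (isT : 0 < 2); case: (jy %% 2) => [|[]].
  apply: (@C4 x y hx hy ne 1 jy) => //.
  move=> a ha h; rewrite (par_nb hx hix aix hjx ajx ha h).
  by move: tx; have := ltn_pmod jx (isT : 0 < 2); case: (jx %% 2) => [|[]].
- move=> x y; rewrite !inE => /andP[bx tx] /andP[b_y ty].
  have [hx [ix hix aix] [jx hjx ajx]] := Bd x bx.
  have [hy [iy hiy aiy] [jy hjy ajy]] := Bd y b_y.
  have ne : x != y by apply/eqP => e; move: ty; rewrite -e tx.
  rewrite (tevP hx hix aix hjx ajx) in tx.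
  rewrite (tevP hy hiy aiy hjy ajy) in ty.
  apply: (@C3 x y ix jx iy jy hx hy ne) => //.
    move=> a ha h; rewrite (par_nb hx hix aix hjx ajx ha h); exact/eqP.
  move=> a ha h; rewrite (par_nb hy hiy aiy hjy ajy ha h).
  by move: ty; have := ltn_pmod jy (isT : 0 < 2); case: (jy %% 2) => [|[]].
Qed.

End Main.

Theorem lemma2p14 (T : finType) (A : rel T) (k : nat) (u v : T) (p : seq T) :
  irreflexive A ->
  odd k -> 5 <= k ->
  strong A -> k_quasi_transitive A k ->
  diam_ge A k.+2 ->
  is_dist A u v k.+2 ->
  shortest_path A u v p ->
  let VP : {set T} := [set x | x \in u :: p] in
  let I : {set T} := [set x | (x \notin VP) && dom A [set x] VP] in
  let W : {set T} := [set x | (x \notin VP) && dom A VP [set x]] in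
  let B : {set T} := ~: (VP :|: I :|: W) in
  semicomplete_bipartite A VP ->
  semicomplete_bipartite A B \/ empty_digraph A B.
Proof.
move=> Airr kodd k5 _ kq _ [[q0 [dq0 lq0 sq0]] mind] [dp lp minp] VP I W B bip.
have sz : size p = k.+2.
  apply/eqP; rewrite eqn_leq; apply/andP; split.
    by rewrite -sq0; apply: minp.
  by apply: mind.
have minp' : forall q, is_dpath A u q -> last u q = last u p -> k.+2 <= size q.
  by move=> q dq lq; apply: mind => //; rewrite lq.
exact: (main_sec Airr k5 kodd kq dp sz minp' bip).
Qed.
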